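(* Let $R$ be a commutative ring and $\sigma$ a homomorphism between projective $R$-modules which is of finite type. Then there is a Gabriel filter of finite type $\mathcal{G}$ over $R$ such that $\mathcal{D}_\sigma=\operatorname{Div}\mathcal{G}$.
   Context: For $\alpha:A\to B$, $\mathcal{D}_\alpha=\{X\mid\operatorname{Hom}_R(\alpha,X)\text{ surjective}\}$; $\sigma$ is of finite type if $\mathcal{D}_\sigma=\bigcap_i\mathcal{D}_{\sigma_i}$ for a set of homomorphisms $\sigma_i$ between finitely generated projective modules. A Gabriel filter is a filter $\mathcal{G}$ of ideals such that (i) $I\in\mathcal{G}$, $x\in R$ imply $(I:x)=\{r\mid xr\in I\}\in\mathcal{G}$, and (ii) if $J$ is an ideal and there is $I\in\mathcal{G}$ with $(J:x)\in\mathcal{G}$ for all $x\in I$, then $J\in\mathcal{G}$. It is of finite type if it has a filter basis of finitely generated ideals. $\operatorname{Div}\mathcal{G}=\{M\mid MI=M\text{ for all }I\in\mathcal{G}\}$ (the $\mathcal{G}$-divisible modules). *)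

(* Defs.v *)
From HB Require Import structures.
From mathcomp Require Import all_boot all_order all_algebra.
Set Implicit Arguments. Unset Strict Implicit. Unset Printing Implicit Defensive.
Import GRing.Theory.
Local Open Scope ring_scope.

Section Defs.
Variable R : comNzRingType.

Definition is_lin (M N : lmodType R) (f : M -> N) : Prop :=
  forall (a : R) (u v : M), f (a *: u + v) = a *: f u + f v.

(* D_alpha = { X | Hom_R(alpha, X) surjective } *)
Definition D_of (A B : lmodType R) (alpha : A -> B) (X : lmodType R) : Prop :=
  forall f : A -> X, is_lin f ->
    exists g : B -> X, is_lin g /\ forall a, g (alpha a) = f a.

Definition projective_mod (P : lmodType R) : Prop :=
  forall (M N : lmodType R) (p : M -> N) (f : P -> N),
    is_lin p -> (forall y, exists x, p x = y) -> is_lin f ->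
    exists g : P -> M, is_lin g /\ forall x, p (g x) = f x.

Definition fin_gen_mod (M : lmodType R) : Prop :=
  exists (n : nat) (s : 'I_n -> M),
    forall m : M, exists c : 'I_n -> R, m = \sum_(i < n) c i *: s i.

Definition finite_type_hom (A B : lmodType R) (sigma : A -> B) : Prop :=
  exists (I : Type) (P Q : I -> lmodType R) (s : forall i, P i -> Q i),
    (forall i, is_lin (s i)) /\
    (forall i, projective_mod (P i) /\ fin_gen_mod (P i)) /\
    (forall i, projective_mod (Q i) /\ fin_gen_mod (Q i)) /\
    (forall X : lmodType R, D_of sigma X <-> forall i, D_of (s i) X).

Definition is_ideal (I : R -> Prop) : Prop :=
  I 0 /\ (forall x y, I x -> I y -> I (x + y)) /\ (forall r x, I x -> I (r * x)).

Definition colon (I : R -> Prop) (x : R) : R -> Prop := fun r => I (x * r).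

Definition gabriel_filter (G : (R -> Prop) -> Prop) : Prop :=
  (forall I, G I -> is_ideal I) /\
  G (fun _ => True) /\
  (forall I J, G I -> is_ideal J -> (forall x, I x -> J x) -> G J) /\
  (forall I J, G I -> G J -> G (fun x => I x /\ J x)) /\
  (forall I x, G I -> G (colon I x)) /\
  (forall J, is_ideal J ->
     (exists I, G I /\ forall x, I x -> G (colon J x)) -> G J).

Definition fg_ideal (J : R -> Prop) : Prop :=
  exists s : seq R, forall x,
    J x <-> exists c : 'I_(size s) -> R, x = \sum_(i < size s) c i * s`_i.

Definition gabriel_finite_type (G : (R -> Prop) -> Prop) : Prop :=
  forall I, G I -> exists J, G J /\ fg_ideal J /\ forall x, J x -> I x.

Definition mod_eq_MI (M : lmodType R) (I : R -> Prop) : Prop :=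
  forall m : M, exists (n : nat) (c : 'I_n -> R) (v : 'I_n -> M),
    (forall i, I (c i)) /\ m = \sum_(i < n) c i *: v i.

Definition Div (G : (R -> Prop) -> Prop) (M : lmodType R) : Prop :=
  forall I, G I -> mod_eq_MI M I.

End Defs.

(* Main.v *)
Require Import Defs.
From HB Require Import structures.
From mathcomp Require Import all_boot all_order all_algebra.
Set Implicit Arguments. Unset Strict Implicit. Unset Printing Implicit Defensive.
Import GRing.Theory.
Local Open Scope ring_scope.

Section Aux.
Variable R : comNzRingType.

Lemma lin0 (M N : lmodType R) (f : M -> N) : is_lin f -> f 0 = 0.
Proof.
move=> h; have E := h 1 0 0; rewrite scaler0 add0r scale1r in E.
by have := congr1 (fun z => z - f 0) E; rewrite addrK subrr => ->.
Qed.

Lemma linD (M N : lmodType R) (f : M -> N) : is_lin f -> forall u v, f (u + v) = f u + f v.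
Proof. by move=> h u v; have := h 1 u v; rewrite !scale1r. Qed.

Lemma linZ (M N : lmodType R) (f : M -> N) : is_lin f -> forall a u, f (a *: u) = a *: f u.
Proof. by move=> h a u; have := h a u 0; rewrite !addr0 (lin0 h) addr0. Qed.

Lemma linB (M N : lmodType R) (f : M -> N) : is_lin f -> forall u v, f (u - v) = f u - f v.
Proof. by move=> h u v; have := h (-1) v u; rewrite !scaleN1r addrC => ->; rewrite addrC. Qed.

Lemma lin_sum (M N : lmodType R) (f : M -> N) (I : Type) (r : seq I) (P : pred I) (F : I -> M) :
  is_lin f -> f (\sum_(i <- r | P i) F i) = \sum_(i <- r | P i) f (F i).
Proof. by move=> h; apply: (big_morph f (linD h) (lin0 h)). Qed.

Lemma lin_comp (M N L : lmodType R) (f : M -> N) (g : N -> L) :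
  is_lin f -> is_lin g -> is_lin (fun x => g (f x)).
Proof. by move=> hf hg a u v; rewrite hf hg. Qed.

Lemma lin_add (M N : lmodType R) (f g : M -> N) :
  is_lin f -> is_lin g -> is_lin (fun x => f x + g x).
Proof. by move=> hf hg a u v; rewrite hf hg scalerDr; rewrite !addrA; congr (_ + _); rewrite -!addrA; congr (_ + _); rewrite addrC. Qed.

Lemma lin_sub (M N : lmodType R) (f g : M -> N) :
  is_lin f -> is_lin g -> is_lin (fun x => f x - g x).
Proof. by move=> hf hg a u v; rewrite hf hg scalerBr opprD !addrA; congr (_ - _); rewrite -!addrA; congr (_ + _); rewrite addrC. Qed.

Lemma lin_id (M : lmodType R) : is_lin (fun x : M => x).
Proof. by []. Qed.

Definition genMem (s : seq R) (X : lmodType R) (m : X) :=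
  exists v : R -> X, m = \sum_(r <- undup s) r *: v r.

Definition genAll (s : seq R) (X : lmodType R) := forall m : X, genMem s m.

Lemma genMem0 s (X : lmodType R) : genMem s (0 : X).
Proof. by exists (fun _ => 0); rewrite big1 // => r _; rewrite scaler0. Qed.

Lemma genMemD s (X : lmodType R) (x y : X) : genMem s x -> genMem s y -> genMem s (x + y).
Proof.
by move=> [v ->] [w ->]; exists (fun r => v r + w r); rewrite -big_split /=; apply: eq_bigr => r _; rewrite scalerDr.
Qed.

Lemma genMemZ s (X : lmodType R) a (x : X) : genMem s x -> genMem s (a *: x).
Proof.
by move=> [v ->]; exists (fun r => a *: v r); rewrite scaler_sumr; apply: eq_bigr => r _; rewrite !scalerA mulrC.
Qed.

Lemma genMem_sum s (X : lmodType R) (I : Type) (r : seq I) (P : pred I) (F : I -> X) :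
  (forall i, P i -> genMem s (F i)) -> genMem s (\sum_(i <- r | P i) F i).
Proof.
move=> h; elim/big_ind: _ => //; [exact: genMem0 | exact: genMemD].
Qed.

Lemma genMem_gen s (X : lmodType R) r (w : X) : r \in s -> genMem s (r *: w).
Proof.
move=> rs; exists (fun r' => if r' == r then w else 0).
rewrite (bigD1_seq r) ?mem_undup ?undup_uniq //= eqxx big1 ?addr0 // => r' /negPf ->.
by rewrite scaler0.
Qed.

Lemma genMem_sub s s' (X : lmodType R) (m : X) :
  {subset s <= s'} -> genMem s m -> genMem s' m.
Proof.
move=> ss [v ->]; rewrite big_seq; apply: genMem_sum => r.
by rewrite mem_undup => /ss; exact: genMem_gen.
Qed.


Definition Kspan (s : seq R) (x : R) :=
  exists c : 'I_(size s) -> R, x = \sum_(i < size s) c i * s`_i.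

Lemma ideal_sum (J : R -> Prop) (I : Type) (r : seq I) (P : pred I) (F : I -> R) :
  is_ideal J -> (forall i, P i -> J (F i)) -> J (\sum_(i <- r | P i) F i).
Proof. by move=> [J0 [JD JM]] h; elim/big_ind: _ => //. Qed.

Lemma Kspan_ideal s : is_ideal (Kspan s).
Proof.
split; first by exists (fun _ => 0); rewrite big1 // => i _; rewrite mul0r.
split.
  move=> x y [c ->] [d ->]; exists (fun i => c i + d i).
  by rewrite -big_split; apply: eq_bigr => i _; rewrite mulrDl.
move=> r x [c ->]; exists (fun i => r * c i).
by rewrite mulr_sumr; apply: eq_bigr => i _; rewrite mulrA.
Qed.

Lemma Kspan_gen s r : r \in s -> Kspan s r.
Proof.
move=> rs; have ir : (index r s < size s)%N by rewrite index_mem.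
exists (fun i => if i == Ordinal ir then 1 else 0).
rewrite (bigD1 (Ordinal ir)) //= eqxx mul1r big1 ?addr0 ?nth_index // => i /negPf ->.
by rewrite mul0r.
Qed.

Lemma Kspan_sub (J : R -> Prop) s x :
  is_ideal J -> (forall r, r \in s -> J r) -> Kspan s x -> J x.
Proof.
move=> hJ hs [c ->]; apply: ideal_sum => // i _.
by case: hJ => _ [_ JM]; apply: JM; apply: hs; apply: mem_nth.
Qed.

Lemma genAll_MI s (X : lmodType R) (J : R -> Prop) :
  genAll s X -> (forall r, r \in s -> J r) -> mod_eq_MI X J.
Proof.
move=> hg hJ m; have [v ->] := hg m.
exists (size (undup s)), (fun i => nth 0 (undup s) i), (fun i => v (nth 0 (undup s) i)).
split.
  by move=> i; apply: hJ; rewrite -mem_undup; apply: mem_nth.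
by rewrite (big_nth 0) big_mkord.
Qed.

Lemma MI_genAll s (X : lmodType R) : mod_eq_MI X (Kspan s) -> genAll s X.
Proof.
move=> h m; have [n [c [v [hc ->]]]] := h m.
apply: genMem_sum => i _; have [d ->] := hc i.
rewrite scaler_suml; apply: genMem_sum => j _.
by rewrite -scalerA; apply: genMemZ; apply: genMem_gen; apply: mem_nth.
Qed.

Section Filter.
Variable Dcls : lmodType R -> Prop.

Definition Gf (J : R -> Prop) : Prop :=
  is_ideal J /\ exists s, (forall r, r \in s -> J r) /\ forall X, Dcls X -> genAll s X.

Lemma ideal_colon (I : R -> Prop) x : is_ideal I -> is_ideal (colon I x).
Proof.
move=> [I0 [ID IM]]; rewrite /colon; split; first by rewrite mulr0.
split; first by move=> a b ha hb; rewrite mulrDr; apply: ID.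
by move=> r a ha; rewrite mulrCA; apply: IM.
Qed.

Lemma Gf_colon_gen (J : R -> Prop) (s : seq R) :
  (forall r, r \in s -> Gf (colon J r)) ->
  exists s', (forall r, r \in s' -> J r) /\
    forall X, Dcls X -> forall r, r \in s -> forall v : X, genMem s' (r *: v).
Proof.
elim: s => [|r0 s IH] h.
  by exists [::]; split => // X _ r; rewrite in_nil.
have [s1 [h1 h1']] : exists s', (forall r, r \in s' -> J r) /\
    forall X, Dcls X -> forall r, r \in s -> forall v : X, genMem s' (r *: v).
  by apply: IH => r rs; apply: h; rewrite in_cons rs orbT.
have [_ [t [ht ht']]] := h r0 (mem_head _ _).
exists (s1 ++ [seq r0 * u | u <- t]); split.
  move=> r; rewrite mem_cat => /orP [/h1 //|/mapP [u ut ->]].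
  exact: ht.
move=> X DX r; rewrite in_cons => /orP [/eqP -> | rs] v.
  have [w ->] := ht' X DX v.
  rewrite scaler_sumr big_seq; apply: genMem_sum => u.
  rewrite mem_undup => ut.
  rewrite scalerA; apply: genMem_gen; rewrite mem_cat; apply/orP; right.
  exact: map_f.
by apply: genMem_sub (h1' X DX r rs v) => z zs; rewrite mem_cat zs.
Qed.


Lemma Gf_gabriel : gabriel_filter Gf.
Proof.
split; first by move=> I [].
split.
  split; first by split => //.
  exists [:: 1]; split => // X _ m.
  by rewrite -[m]scale1r; apply: genMem_gen; rewrite mem_head.
split.
  by move=> I J [_ [s [hs hs']]] hJ sub; split => //; exists s; split => // r /hs /sub.
split.
  move=> I J [hI [s1 [h1 h1']]] [hJ [s2 [h2 h2']]].
  split.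
    case: hI => [I0 [ID IM]]; case: hJ => [J0 [JD JM]].
    split; first by split.
    split; first by move=> x y [? ?] [? ?]; split; [apply: ID|apply: JD].
    by move=> r x [? ?]; split; [apply: IM|apply: JM].
  exists [seq a * b | a <- s1, b <- s2]; split.
    move=> r /allpairsP [[a b] /= [ha hb ->]]; split.
      by case: hI => _ [_ IM]; rewrite mulrC; apply: IM; apply: h1.
    by case: hJ => _ [_ JM]; apply: JM; apply: h2.
  move=> X DX m; have [v ->] := h1' X DX m.
  rewrite big_seq; apply: genMem_sum => a; rewrite mem_undup => ha.
  have [w ->] := h2' X DX (v a).
  rewrite scaler_sumr big_seq; apply: genMem_sum => b; rewrite mem_undup => hb.
  by rewrite scalerA; apply: genMem_gen; apply: allpairs_f.
split.
  move=> I x [hI [s [hs hs']]]; split; first exact: ideal_colon.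
  exists s; split => // r /hs; rewrite /colon.
  by case: hI => _ [_ IM]; apply: IM.
move=> J hJ [I [[hI [s [hs hs']]] hc]].
split => //.
have [s' [h1 h2]] := @Gf_colon_gen J s (fun r rs => hc r (hs r rs)).
exists s'; split => // X DX m; have [v ->] := hs' X DX m.
rewrite big_seq; apply: genMem_sum => r; rewrite mem_undup => rs.
exact: h2.
Qed.

Lemma Gf_finite : gabriel_finite_type Gf.
Proof.
move=> I [hI [s [hs hs']]]; exists (Kspan s); split.
  split; first exact: Kspan_ideal.
  by exists s; split => //; exact: Kspan_gen.
split; first by exists s.
by move=> x; apply: Kspan_sub.
Qed.

Lemma Gf_Div (X : lmodType R) : Dcls X -> Div Gf X.
Proof. by move=> DX I [_ [s [hs hs']]]; apply: genAll_MI (hs' X DX) hs. Qed.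

Lemma Div_Gf (X : lmodType R) s : (forall Y, Dcls Y -> genAll s Y) -> Div Gf X -> genAll s X.
Proof.
move=> h hX; apply: MI_genAll; apply: hX; split; first exact: Kspan_ideal.
by exists s; split => //; exact: Kspan_gen.
Qed.

End Filter.


Section Mat.

Definition surjA n N (A : 'M[R]_(n, N)) (X : lmodType R) :=
  forall x : 'I_n -> X, exists y : 'I_N -> X, forall k, \sum_l A k l *: y l = x k.

Definition minors n N (A : 'M[R]_(n, N)) : seq R :=
  [seq \det (colsub (fun j => f j) A) | f : {ffun 'I_n -> 'I_N} <- enum {ffun 'I_n -> 'I_N}].

Lemma minors_mem n N (A : 'M[R]_(n, N)) (f : {ffun 'I_n -> 'I_N}) :
  \det (colsub (fun j => f j) A) \in minors A.
Proof. by apply: map_f; rewrite mem_enum. Qed.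

Section Ach.
Variables (n N : nat) (A : 'M[R]_(n, N)) (X : lmodType R).
Definition ach (x : 'I_n -> X) := exists y : 'I_N -> X, forall k, \sum_l A k l *: y l = x k.

Lemma ach_ext x x' : ach x -> (forall k, x k = x' k) -> ach x'.
Proof. by move=> [y hy] e; exists y => k; rewrite hy e. Qed.

Lemma ach0 : ach (fun _ => 0).
Proof. by exists (fun _ => 0) => k; rewrite big1 // => l _; rewrite scaler0. Qed.

Lemma achD x1 x2 : ach x1 -> ach x2 -> ach (fun k => x1 k + x2 k).
Proof.
move=> [y1 h1] [y2 h2]; exists (fun l => y1 l + y2 l) => k.
by rewrite -h1 -h2 -big_split; apply: eq_bigr => l _; rewrite scalerDr.
Qed.

Lemma ach_sum (I : Type) (r : seq I) (F : I -> 'I_n -> X) :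
  (forall i, ach (F i)) -> ach (fun k => \sum_(i <- r) F i k).
Proof.
move=> h; elim: r => [|i r IH].
  by apply: (@ach_ext _ _ ach0) => k; rewrite big_nil.
by apply: (@ach_ext _ _ (achD (h i) IH)) => k; rewrite big_cons.
Qed.

Lemma ach_sum_mem (I : eqType) (r : seq I) (F : I -> 'I_n -> X) :
  (forall i, i \in r -> ach (F i)) -> ach (fun k => \sum_(i <- r) F i k).
Proof.
elim: r => [|i r IH] h.
  by apply: (@ach_ext _ _ ach0) => k; rewrite big_nil.
have IH' : ach (fun k => \sum_(j <- r) F j k).
  by apply: IH => j jr; apply: h; rewrite in_cons jr orbT.
by apply: (@ach_ext _ _ (achD (h i (mem_head _ _)) IH')) => k; rewrite big_cons.
Qed.

Lemma ach_single (f : {ffun 'I_n -> 'I_N}) k0 (u : X) :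
  ach (fun k => if k == k0 then \det (colsub (fun j => f j) A) *: u else 0).
Proof.
set B := colsub (fun j => f j) A.
exists (fun l => \sum_t (if f t == l then \adj B t k0 *: u else 0)) => k.
have -> : \sum_l A k l *: (\sum_t (if f t == l then \adj B t k0 *: u else 0))
    = \sum_t \sum_l (if l == f t then A k l *: (\adj B t k0 *: u) else 0).
  rewrite exchange_big /=; apply: eq_bigr => l _; rewrite scaler_sumr.
  by apply: eq_bigr => t _; rewrite eq_sym; case: ifP => _; rewrite ?scaler0.
have -> : \sum_t \sum_l (if l == f t then A k l *: (\adj B t k0 *: u) else 0)
    = (B *m \adj B) k k0 *: u.
  rewrite [in RHS]mxE scaler_suml. apply: eq_bigr => t _.
  rewrite -big_mkcond big_pred1_eq /B !mxE /= scalerA //.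
rewrite (mul_mx_adj B) mxE; case: (k == k0); rewrite ?mulr1n ?mulr0n ?scale0r //.
Qed.

Lemma genAll_surj : genAll (minors A) X -> surjA A X.
Proof.
move=> hg x.
suff : ach x by [].
apply: (@ach_ext (fun k => \sum_(k0 < n) (if k0 == k then x k0 else 0))); last first.
  by move=> k; rewrite -big_mkcond /= big_pred1_eq.
apply: ach_sum => k0.
have [v hv] := hg (x k0).
apply: (@ach_ext (fun k => \sum_(r <- undup (minors A)) (if k0 == k then r *: v r else 0))); last first.
  move=> k; case: (k0 == k); first by rewrite hv.
  by rewrite big1.
apply: ach_sum_mem => r; rewrite mem_undup => /mapP [f _ ->].
by apply: (@ach_ext _ _ (ach_single f k0 (v _))) => k; rewrite eq_sym.
Qed.
End Ach.

Lemma surj_genAll n : forall N (A : 'M[R]_(n, N)) (X : lmodType R),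
  surjA A X -> genAll (minors A) X.
Proof.
elim: n => [|n IH] N A X hs m.
  pose f : {ffun 'I_0 -> 'I_N} := ffun0 (card_ord 0).
  rewrite -[m]scale1r -(det_mx00 (colsub (fun j => f j) A)).
  by apply: genMem_gen; apply: minors_mem.
pose A' : 'M[R]_(n, N) := row' ord0 A.
have hs' : surjA A' X.
  move=> x'; have [y hy] := hs (fun i => if unlift ord0 i is Some j then x' j else 0).
  exists y => k; rewrite -[x' k]/(if Some k is Some j then x' j else 0) -(liftK ord0 k) -hy.
  by apply: eq_bigr => l _; rewrite /A' mxE.
have key : forall (f : {ffun 'I_n -> 'I_N}) (w : X),
    genMem (minors A) (\det (colsub (fun j => f j) A') *: w).
  move=> f w.
  have [y hy] := hs (fun i => if i == ord0 then w else 0).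
  pose g l : {ffun 'I_n.+1 -> 'I_N} :=
    [ffun i => if unlift ord0 i is Some j then f j else l].
  pose c (i : 'I_n.+1) := (-1) ^+ (i + @ord0 n) * \det (row' i (colsub (fun j => f j) A)).
  have E : forall l, \det (colsub (fun j => g l j) A) = \sum_i A i l * c i.
    move=> l; rewrite (expand_det_col _ ord0); apply: eq_bigr => i _.
    congr (_ * _); first by rewrite !mxE /g ffunE unlift_none.
    rewrite /cofactor /c; congr (_ * \det (row' i _)).
    by apply/matrixP => a b; rewrite !mxE /g ffunE liftK.
  have -> : \det (colsub (fun j => f j) A') *: w
      = \sum_l \det (colsub (fun j => g l j) A) *: y l.
    have -> : \sum_l \det (colsub (fun j => g l j) A) *: y l
        = \sum_i c i *: (if i == ord0 then w else 0).
      under eq_bigr => l _ do rewrite E scaler_suml.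
      rewrite exchange_big /=; apply: eq_bigr => i _.
      rewrite -hy scaler_sumr; apply: eq_bigr => l _.
      by rewrite scalerA mulrC.
    rewrite (bigD1 ord0) //= big1 ?addr0; last first.
      by move=> i /negPf ->; rewrite scaler0.
    congr (_ *: _); rewrite /c expr0 mul1r; congr (\det _).
    by apply/matrixP => a b; rewrite !mxE.
  apply: genMem_sum => l _; apply: genMem_gen.
  exact: (minors_mem A (g l)).
have [v ->] := IH N A' X hs' m.
rewrite big_seq; apply: genMem_sum => r; rewrite mem_undup => /mapP [f _ ->].
exact: key.
Qed.

End Mat.

Section Proj.

Lemma split_l m n (a : 'I_m) : split (lshift n a) = inl a.
Proof. exact: (unsplitK (inl _ a)). Qed.
Lemma split_r m n (b : 'I_n) : split (rshift m b) = inr b.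
Proof. exact: (unsplitK (inr _ b)). Qed.

Lemma lin_comb n (Y : lmodType R) (z : 'I_n -> Y) :
  is_lin (fun u : 'rV[R]_n => \sum_k u ord0 k *: z k).
Proof.
move=> a u v; rewrite scaler_sumr -big_split; apply: eq_bigr => k _.
by rewrite !mxE scalerDl scalerA.
Qed.

Lemma comb_delta n (Y : lmodType R) (z : 'I_n -> Y) k :
  \sum_l (delta_mx ord0 k : 'rV[R]_n) ord0 l *: z l = z k.
Proof.
rewrite (bigD1 k) //= big1 ?addr0; first by rewrite mxE !eqxx scale1r.
by move=> l /negPf lk; rewrite mxE lk andbF scale0r.
Qed.

Lemma rV_decomp n (u : 'rV[R]_n) : u = \sum_k u ord0 k *: delta_mx ord0 k.
Proof.
apply/matrixP => i j; rewrite (ord1 i) summxE (bigD1 j) //= big1 ?addr0.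
  by rewrite !mxE !eqxx mulr1.
by move=> l /negPf lk; rewrite !mxE eqxx eq_sym lk mulr0.
Qed.

Lemma lin_rV n (Y : lmodType R) (phi : 'rV[R]_n -> Y) u :
  is_lin phi -> phi u = \sum_k u ord0 k *: phi (delta_mx ord0 k).
Proof.
move=> h; rewrite {1}(rV_decomp u) lin_sum //; apply: eq_bigr => k _.
exact: linZ.
Qed.

Lemma fg_proj_surj (P : lmodType R) : projective_mod P /\ fin_gen_mod P ->
  exists n (pP : 'rV[R]_n -> P) (iP : P -> 'rV[R]_n),
    is_lin pP /\ is_lin iP /\ forall x, pP (iP x) = x.
Proof.
move=> [hp [n [gP hg]]].
pose pP (u : 'rV[R]_n) := \sum_k u ord0 k *: gP k.
have lp : is_lin pP by exact: lin_comb.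
have sp : forall y, exists x, pP x = y.
  move=> y; have [c ->] := hg y; exists (\row_k c k).
  by apply: eq_bigr => k _; rewrite mxE.
have [iP [li hi]] := hp _ _ pP id lp sp (@lin_id P).
by exists n, pP, iP.
Qed.

Lemma D_of_surj (P Q : lmodType R) (s : P -> Q) : is_lin s ->
  projective_mod P /\ fin_gen_mod P -> projective_mod Q /\ fin_gen_mod Q ->
  exists n N (A : 'M[R]_(n, N)), forall X, D_of s X <-> surjA A X.
Proof.
move=> ls hP hQ.
have [n [pP [iP [lpP [liP hiP]]]]] := fg_proj_surj hP.
have [m [pQ [iQ [lpQ [liQ hiQ]]]]] := fg_proj_surj hQ.
pose e k : 'rV[R]_n := delta_mx ord0 k.
pose A : 'M[R]_(n, m + n) := \matrix_(k, l) match split l with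
   | inl a => (iQ (s (pP (e k)))) ord0 a
   | inr b => (e k - iP (pP (e k))) ord0 b end.
exists n, (m + n), A => X.
have Asum : forall k (y : 'I_(m + n) -> X), \sum_l A k l *: y l =
    \sum_a (iQ (s (pP (e k)))) ord0 a *: y (lshift n a)
    + \sum_b (e k - iP (pP (e k))) ord0 b *: y (rshift m b).
  move=> k y; rewrite big_split_ord /=; congr (_ + _); apply: eq_bigr => ? _.
    by rewrite mxE split_l.
  by rewrite mxE split_r.
split.
  move=> hD x.
  pose h (u : 'rV[R]_n) := \sum_l u ord0 l *: x l.
  have lh : is_lin h := lin_comb x.
  have [g [lg hg]] := hD (fun a => h (iP a)) (lin_comp liP lh).
  exists (fun l => match split l with
     | inl a => g (pQ (delta_mx ord0 a)) | inr b => x b end) => k.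
  rewrite Asum.
  under eq_bigr do rewrite split_l.
  under [X in _ + X]eq_bigr do rewrite split_r.
  have E := lin_rV (iQ (s (pP (e k)))) (lin_comp lpQ lg); simpl in E.
  rewrite -E hiQ hg.
  change (\sum_b (e k - iP (pP (e k))) ord0 b *: x b) with (h (e k - iP (pP (e k)))).
  by rewrite (linB lh) /h comb_delta addrC subrK.
move=> hs f lf.
have [y hy] := hs (fun k => f (pP (e k))).
pose g (q : Q) := \sum_a (iQ q) ord0 a *: y (lshift n a).
pose h2 (u : 'rV[R]_n) := \sum_b u ord0 b *: y (rshift m b).
have lg : is_lin g := lin_comp liQ (lin_comb _).
have lh2 : is_lin h2 := lin_comb (fun b => y (rshift m b)).
exists g; split => // a.
have L : is_lin (fun u => g (s (pP u)) + h2 (u - iP (pP u))).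
  apply: lin_add; first exact: (lin_comp lpP (lin_comp ls lg)).
  apply: (lin_comp _ lh2); exact: (lin_sub (@lin_id _) (lin_comp lpP liP)).
have Rl : is_lin (fun u => f (pP u)) := lin_comp lpP lf.
have key : forall u, g (s (pP u)) + h2 (u - iP (pP u)) = f (pP u).
  move=> u; have E1 := lin_rV u L; have E2 := lin_rV u Rl; simpl in E1, E2.
  rewrite E1 E2; apply: eq_bigr => k _; congr (_ *: _).
  by rewrite -hy Asum.
by have := key (iP a); rewrite hiP subrr (lin0 lh2) addr0.
Qed.

End Proj.

End Aux.

Theorem proposition4p4 (R : comNzRingType) (A B : lmodType R) (sigma : A -> B)
  (hA : projective_mod A) (hB : projective_mod B) (hlin : is_lin sigma)
  (hft : finite_type_hom sigma) :
  exists G : (R -> Prop) -> Prop,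
    gabriel_filter G /\ gabriel_finite_type G /\
    forall X : lmodType R, D_of sigma X <-> Div G X.
Proof.
move: hft => [I [P [Q [s [ls [hP [hQ hD]]]]]]].
exists (Gf (D_of sigma)); split; first exact: Gf_gabriel.
split; first exact: Gf_finite.
move=> X; split; first exact: Gf_Div.
move=> hX; apply/hD => i.
have [n [N [M hM]]] := D_of_surj (ls i) (hP i) (hQ i).
apply/hM; apply: genAll_surj; apply: (@Div_Gf _ _ X (minors M)) hX.
move=> Y DY; apply: surj_genAll; apply/hM; exact: (proj1 (hD Y) DY i).
Qed.
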